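(* Let $B$ be a non-abelian group, $H$ a finitely generated infinite group with fixed finite generating set $X=\{x_1,\dots,x_n\}$, $W=B\wr H$, and fix $a,b\in B$ with $ab\ne ba$. For $S\subseteq H$ define $\bar a,\bar b_S\in B^H$ by $\bar a(1)=a$, $\bar a(x)=1$ for $x\neq1$, and $\bar b_S(x)=b$ for $x\in S$, $\bar b_S(x)=1$ for $x\notin S$, and set $Y_S=(x_1,\dots,x_n,\bar a,\bar b_S)$. Let $S,T\in D_R(H)$ satisfy $S\cap \mathrm{Ball}_H(2r)=T\cap\mathrm{Ball}_H(2r)$ for some $r\in\mathbb N$. Then a word $w_S$ of length at most $r$ in the alphabet $Y_S^{\pm1}$ represents $1$ in $W$ if and only if the word $w_T$ in $Y_T^{\pm1}$ obtained from $w_S$ by replacing each occurrence of $\bar b_S^{\pm1}$ with $\bar b_T^{\pm1}$ represents $1$ in $W$.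
   Context: $B^H$ is the group of all functions $H\to B$ with pointwise multiplication; $B\wr H=B^H\rtimes H$ with $(hfh^{-1})(x)=f(h^{-1}x)$. $|h|_X$ denotes word length of $h\in H$ with respect to $X$ and $\mathrm{Ball}_H(m)=\{h\in H:|h|_X\le m\}$. $2^H$ is the space of all subsets of $H$ with the product topology; $H$ acts on it by right multiplication $S\mapsto Sh$, and $D_R(H)$ is the set of $S\subseteq H$ whose orbit $\{Sh:h\in H\}$ is dense in $2^H$. *)

(* Defs.v *)
From Stdlib Require Import List Arith ClassicalEpsilon.
Import ListNotations.
Set Implicit Arguments.
Unset Strict Implicit.

Record group := Group {
  carrier :> Type;
  gmul : carrier -> carrier -> carrier;
  ginv : carrier -> carrier;
  gone : carrier;
  gmulA : forall x y z, gmul x (gmul y z) = gmul (gmul x y) z;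
  gmul1g : forall x, gmul gone x = x;
  gmulg1 : forall x, gmul x gone = x;
  gmulVg : forall x, gmul (ginv x) x = gone;
  gmulgV : forall x, gmul x (ginv x) = gone
}.

Arguments gmul {g}. Arguments ginv {g}. Arguments gone {g}.

(* Evaluation of a word over a finite list X of elements of H and their
   inverses; a letter (i, true) is X_i, (i, false) is X_i^{-1}. *)
Definition letter_val (H : group) (X : list H) (l : nat * bool) : H :=
  if snd l then nth (fst l) X gone else ginv (nth (fst l) X gone).

Definition eval_wordH (H : group) (X : list H) (w : list (nat * bool)) : H :=
  fold_right (fun l acc => gmul (letter_val X l) acc) gone w.

Definition word_over (n : nat) (w : list (nat * bool)) : Prop :=
  Forall (fun l => fst l < n) w.

Definition generates (H : group) (X : list H) : Prop :=
  forall h : H, exists w, word_over (length X) w /\ eval_wordH X w = h.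

Definition infinite_group (H : group) : Prop :=
  forall l : list H, exists h : H, ~ In h l.

Definition non_abelian (B : group) : Prop :=
  exists x y : B, gmul x y <> gmul y x.

Definition in_ball (H : group) (X : list H) (m : nat) (h : H) : Prop :=
  exists w, word_over (length X) w /\ length w <= m /\ eval_wordH X w = h.

(* Subsets of H are elements of 2^H = H -> bool.  Right translate:
   x \in S h  iff  x h^{-1} \in S. *)
Definition rtrans (H : group) (S : H -> bool) (h : H) : H -> bool :=
  fun x => S (gmul x (ginv h)).

(* D_R(H): the orbit {S h} is dense in 2^H with the product topology, i.e.
   it meets every basic open set {P | P x = P0 x for all x in F}
   (F finite, P0 in 2^H). *)
Definition dense_orbit (H : group) (S : H -> bool) : Prop :=
  forall (F : list H) (P0 : H -> bool),
    exists h : H, forall x, In x F -> rtrans S h x = P0 x.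

Definition welt (B H : group) : Type := ((H -> B) * H)%type.

(* (f,h)(g,k) = (f . (h g h^{-1}), h k) with (h g h^{-1})(x) = g(h^{-1} x). *)
Definition wmul (B H : group) (u v : welt B H) : welt B H :=
  (fun x => gmul (fst u x) (fst v (gmul (ginv (snd u)) x)), gmul (snd u) (snd v)).

Definition wone (B H : group) : welt B H := (fun _ => gone, gone).

(* (f,h)^{-1} = (h^{-1} f^{-1} h, h^{-1}); (h^{-1} f^{-1} h)(x) = f(h x)^{-1}. *)
Definition winv (B H : group) (u : welt B H) : welt B H :=
  (fun x => ginv (fst u (gmul (snd u) x)), ginv (snd u)).

Definition delta1 (B H : group) (a : B) : H -> B :=
  fun x => if excluded_middle_informative (x = gone) then a else gone.

Definition indic (B H : group) (b : B) (S : H -> bool) : H -> B :=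
  fun x => if S x then b else gone.

Inductive ysym := ygen (i : nat) | ya | yb.

Definition ysym_val (B H : group) (X : list H) (a b : B) (S : H -> bool)
  (y : ysym) : welt B H :=
  match y with
  | ygen i => (fun _ => gone, nth i X gone)
  | ya => (@delta1 B H a, gone)
  | yb => (indic b S, gone)
  end.

(* A word in Y_S^{+-1}: a list of (symbol, sign); sign false = inverse. *)
Definition eval_wordW (B H : group) (X : list H) (a b : B) (S : H -> bool)
  (w : list (ysym * bool)) : welt B H :=
  fold_right (fun (l : ysym * bool) (acc : welt B H) =>
    @wmul B H (if snd l then ysym_val X a b S (fst l)
          else @winv B H (ysym_val X a b S (fst l))) acc) (wone B H) w.

Definition yword_ok (n : nat) (w : list (ysym * bool)) : Prop :=
  Forall (fun l => match fst l with ygen i => i < n | _ => True end) w.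

(* Equality in W = B^H x| H is pointwise equality of the B^H component and
   equality of the H component. *)
Definition represents_one (B H : group) (X : list H) (a b : B)
  (S : H -> bool) (w : list (ysym * bool)) : Prop :=
  let u := eval_wordW X a b S w in
  (forall x, fst u x = gone) /\ snd u = gone.

(* Main.v *)
Require Import Defs.
From Stdlib Require Import List Arith.
From Stdlib Require Import Lia Classical ClassicalEpsilon.
Import ListNotations.
Set Implicit Arguments.
Unset Strict Implicit.

Section GL.
Variable G : group.
Lemma inv_uniq (x y : G) : gmul x y = gone -> y = ginv x.
Proof.
  intro h. rewrite <- (gmul1g y). rewrite <- (gmulVg x). rewrite <- gmulA.
  rewrite h. apply gmulg1.
Qed.
Lemma ginv1 : ginv (@gone G) = gone.
Proof. symmetry. apply inv_uniq. apply gmul1g. Qed.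
Lemma ginvK (x : G) : ginv (ginv x) = x.
Proof. symmetry. apply inv_uniq. apply gmulVg. Qed.
Lemma ginvM (x y : G) : ginv (gmul x y) = gmul (ginv y) (ginv x).
Proof.
  symmetry. apply inv_uniq. rewrite gmulA. rewrite <- (gmulA x y).
  rewrite gmulgV, gmulg1. apply gmulgV.
Qed.
Lemma mul_eq1 (q z : G) : gmul q z = gone -> q = ginv z.
Proof.
  intro h. rewrite <- (gmulg1 q). rewrite <- (gmulgV z). rewrite gmulA.
  rewrite h. apply gmul1g.
Qed.
End GL.

Definition lval (B H : group) (X : list H) (a b : B) (S : H -> bool)
  (l : ysym * bool) : welt B H :=
  if snd l then ysym_val X a b S (fst l) else winv (ysym_val X a b S (fst l)).

Definition hsym (H : group) (X : list H) (y : ysym) : H :=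
  match y with ygen i => nth i X gone | _ => gone end.

Definition hl (H : group) (X : list H) (l : ysym * bool) : H :=
  if snd l then hsym X (fst l) else ginv (hsym X (fst l)).

Lemma eval_cons (B H : group) (X : list H) (a b : B) S l w :
  eval_wordW X a b S (l :: w) = wmul (lval X a b S l) (eval_wordW X a b S w).
Proof. reflexivity. Qed.

Lemma snd_lval (B H : group) (X : list H) (a b : B) S l :
  snd (lval X a b S l) = hl X l.
Proof. destruct l as [[i| |] []]; reflexivity. Qed.

Lemma fst_lval_local (B H : group) (X : list H) (a b : B) S T l x x' :
  S x = T x' -> (x = gone <-> x' = gone) ->
  fst (lval X a b S l) x = fst (lval X a b T l) x'.
Proof.
  intros h1 h2. destruct l as [[i| |] []]; cbn; rewrite ?gmul1g; try reflexivity.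
  - unfold delta1. destruct (excluded_middle_informative (x = gone));
    destruct (excluded_middle_informative (x' = gone)); tauto.
  - unfold delta1. destruct (excluded_middle_informative (x = gone));
    destruct (excluded_middle_informative (x' = gone)); tauto.
  - unfold indic. rewrite h1. reflexivity.
  - unfold indic. rewrite h1. reflexivity.
Qed.

Fixpoint pts (H : group) (X : list H) (w : list (ysym * bool)) : list H :=
  match w with
  | [] => [gone]
  | l :: w' => gone :: map (fun q => gmul q (ginv (hl X l))) (pts X w')
  end.

Lemma local (B H : group) (X : list H) (a b : B) S T w : forall x x',
  (forall q, In q (pts X w) -> S (gmul q x) = T (gmul q x') /\
     (gmul q x = gone <-> gmul q x' = gone)) ->
  fst (eval_wordW X a b S w) x = fst (eval_wordW X a b T w) x'.
Proof.
  induction w as [|l w IH]; intros x x' h.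
  - reflexivity.
  - rewrite !eval_cons. cbn [wmul fst]. rewrite !snd_lval. f_equal.
    + destruct (h gone (or_introl eq_refl)) as [h1 h2].
      rewrite !gmul1g in h1, h2. apply fst_lval_local; auto.
    + apply IH. intros q hq.
      assert (hin : In (gmul q (ginv (hl X l))) (pts X (l :: w))).
      { right. apply in_map_iff. exists q; auto. }
      destruct (h _ hin) as [h1 h2]. rewrite !gmulA. auto.
Qed.

Lemma snd_eval (B H : group) (X : list H) (a b : B) S T w :
  snd (eval_wordW X a b S w) = snd (eval_wordW X a b T w).
Proof.
  induction w as [|l w IH]; [reflexivity|].
  rewrite !eval_cons. cbn [wmul snd]. rewrite !snd_lval, IH. reflexivity.
Qed.

Lemma eval_app (H : group) (X : list H) w1 w2 :
  eval_wordH X (w1 ++ w2) = gmul (eval_wordH X w1) (eval_wordH X w2).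
Proof.
  induction w1 as [|l w1 IH]; cbn.
  - symmetry; apply gmul1g.
  - unfold eval_wordH in IH. rewrite IH. apply gmulA.
Qed.

Lemma ball_mul (H : group) (X : list H) m n p q :
  in_ball X m p -> in_ball X n q -> in_ball X (m + n) (gmul p q).
Proof.
  intros [w1 [o1 [l1 e1]]] [w2 [o2 [l2 e2]]]. exists (w1 ++ w2).
  split; [apply Forall_app; auto|]. split.
  - rewrite length_app. lia.
  - rewrite eval_app. congruence.
Qed.

Lemma ball_mono (H : group) (X : list H) m n p :
  m <= n -> in_ball X m p -> in_ball X n p.
Proof. intros hmn [w [o [l e]]]. exists w. repeat split; auto. lia. Qed.

Lemma ball_one (H : group) (X : list H) : in_ball X 0 gone.
Proof. exists []. split; [constructor|]. split; [cbn; lia | reflexivity]. Qed.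

Lemma ball_gen (H : group) (X : list H) i :
  in_ball X 1 (nth i X gone) /\ in_ball X 1 (ginv (nth i X gone)).
Proof.
  destruct (lt_dec i (length X)) as [hi|hi].
  - split; [exists [(i, true)] | exists [(i, false)]]; repeat split;
      try (constructor; cbn; auto); cbn; apply gmulg1.
  - rewrite nth_overflow by lia. rewrite ginv1.
    split; apply (ball_mono (m := 0)); auto; apply ball_one.
Qed.

Lemma ball_hl (H : group) (X : list H) l :
  in_ball X 1 (hl X l) /\ in_ball X 1 (ginv (hl X l)).
Proof.
  destruct l as [[i| |] []]; cbn; rewrite ?ginvK, ?ginv1;
    try apply ball_gen;
    try (split; apply (ball_mono (m := 0)); auto; apply ball_one).
  destruct (ball_gen X i); split; auto.
Qed.

Lemma pts_ball (H : group) (X : list H) w q :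
  In q (pts X w) -> in_ball X (length w) q /\ in_ball X (length w) (ginv q).
Proof.
  revert q; induction w as [|l w IH]; intros q hq; cbn in hq.
  - destruct hq as [<-|[]]. rewrite ginv1. split; apply ball_one.
  - destruct hq as [<-|hq].
    + rewrite ginv1. split; apply (ball_mono (m := 0)); try lia; apply ball_one.
    + apply in_map_iff in hq. destruct hq as [q0 [<- hq0]].
      destruct (IH q0 hq0) as [b1 b2]. destruct (ball_hl X l) as [c1 c2].
      cbn [length]. split.
      * apply (ball_mono (m := length w + 1)); [lia|]. apply ball_mul; auto.
      * rewrite ginvM, ginvK.
        apply (ball_mono (m := 1 + length w)); [lia|]. apply ball_mul; auto.
Qed.

Lemma avoid (H : group) (S : H -> bool) (hinf : infinite_group H)
  (hS : dense_orbit S) : forall L F P0, exists h,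
  (forall y, In y F -> rtrans S h y = P0 y) /\ ~ In h L.
Proof.
  induction L as [|q L IH]; intros F P0.
  - destruct (hS F P0) as [h Hh]. exists h; split; auto.
  - destruct (hinf F) as [y Hy].
    set (P0' := fun y' => if excluded_middle_informative (y' = y)
                  then negb (S (gmul y (ginv q))) else P0 y').
    destruct (IH (y :: F) P0') as [h [Hh Hnh]]. exists h; split.
    + intros y' Hy'. rewrite Hh by (right; auto). unfold P0'.
      destruct (excluded_middle_informative (y' = y)); [subst; contradiction | reflexivity].
    + intros [Heq | Hin]; [| contradiction]. subst q.
      specialize (Hh y (or_introl eq_refl)). unfold rtrans, P0' in Hh.
      destruct (excluded_middle_informative (y = y)); [| congruence].
      destruct (S (gmul y (ginv h))); discriminate.
Qed.

Lemma dir (B H : group) (X : list H) (a b : B) S T w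
  (hinf : infinite_group H) (hS : dense_orbit S)
  (hagree : forall q q', In q (pts X w) -> In q' (pts X w) ->
     S (gmul q' (ginv q)) = T (gmul q' (ginv q))) :
  (forall x, fst (eval_wordW X a b S w) x = gone) ->
  forall x, fst (eval_wordW X a b T w) x = gone.
Proof.
  intros H0 x.
  destruct (classic (exists q, In q (pts X w) /\ gmul q x = gone)) as [[q [Hq Hqx]] | Hn].
  - apply inv_uniq in Hqx. subst x. rewrite <- (H0 (ginv q)). symmetry.
    apply local. intros q' Hq'. split; [apply hagree; auto | tauto].
  - destruct (avoid hinf hS (pts X w) (pts X w) (fun y => T (gmul y x)))
      as [h [Hh Hnh]].
    rewrite <- (H0 (ginv h)). apply local. intros q hq. split.
    + symmetry. apply (Hh q hq).
    + split; intro e; [exfalso; apply Hn; eauto|].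
      apply mul_eq1 in e. rewrite ginvK in e. subst; contradiction.
Qed.

Theorem lemma3p5 (B H : group) (X : list H) (a b : B) (S T : H -> bool)
  (r : nat)
  (hB : non_abelian B) (hgen : generates X) (hinf : infinite_group H)
  (hab : gmul a b <> gmul b a)
  (hS : dense_orbit S) (hT : dense_orbit T)
  (hST : forall h : H, in_ball X (2 * r) h -> S h = T h)
  (w : list (ysym * bool)) (hw : yword_ok (length X) w) (hlen : length w <= r) :
  represents_one X a b S w <-> represents_one X a b T w.
Proof.
  unfold represents_one. cbv zeta.
  assert (hsnd := snd_eval X a b S T w).
  assert (ag : forall q q', In q (pts X w) -> In q' (pts X w) ->
     S (gmul q' (ginv q)) = T (gmul q' (ginv q))).
  { intros q q' hq hq'. apply hST.
    apply (ball_mono (m := length w + length w)); [lia|].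
    apply ball_mul; [apply (pts_ball hq') | apply (pts_ball hq)]. }
  split; intros [h1 h2]; split.
  - apply (dir (S := S)); auto.
  - congruence.
  - apply (dir (S := T)); auto. intros; symmetry; apply ag; auto.
  - congruence.
Qed.
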